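(* Let $(X,\tau)$ be a locally convex-solid Riesz space with topological dual $X^*$, and let $X_+=\{x\in X: x\ge 0\}$ and $X^*_+=\{\xi\in X^*:\langle x,\xi\rangle\ge 0 \text{ for all } x\in X_+\}$. Assume that there exists a $\sigma(X^*,X)$-compact set $\Gamma\subset X^*_+$ such that the convex cone generated by $\Gamma$ is $\sigma(X^*,X)$-dense in $X^*_+$. Let $C\subset X$ be a convex cone satisfying $C\cap X_+=\{0\}$, and let $C^\circ=\{\xi\in X^*:\langle x,\xi\rangle\le 0 \text{ for all } x\in C\}$. Then for any $f\in X^*$ the following conditions are equivalent: (i) there exists a convex solid $\tau$-neighbourhood of zero $V$ such that $\sup_{x\in C_V}\langle x,f\rangle<+\infty$, where $C_V=\{x\in C: x^-\in V\}$; (ii) there exists $g\in C^\circ$ such that $g\ge f$.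
   Context: A locally convex-solid Riesz space is a vector lattice $X$ endowed with a linear topology $\tau$ having a local base at zero consisting of convex solid sets. A set $V\subset X$ is solid if $x\in V$ and $|y|\le|x|$ imply $y\in V$. For $x\in X$, $x^+$, $x^-$, $|x|$ denote its positive part, negative part and absolute value. $X^*$ is ordered by the dual cone $X^*_+$: $g\ge f$ means $g-f\in X^*_+$. $\sigma(X^*,X)$ denotes the weak-star topology on $X^*$. *)

(* Defs.v *)
From HB Require Import structures.
From mathcomp Require Import all_boot all_order all_algebra.
From mathcomp Require Import all_classical all_reals all_analysis.
Set Implicit Arguments. Unset Strict Implicit. Unset Printing Implicit Defensive.
Import Order.TTheory GRing.Theory Num.Theory numFieldTopology.Exports.
Local Open Scope classical_set_scope.
Local Open Scope ring_scope.

Section RieszDefs.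
Variables (R : realType) (X : lmodType R).
Variables (le : X -> X -> Prop) (join : X -> X -> X).

Definition is_riesz_space : Prop :=
  [/\ (forall x, le x x),
      (forall x y, le x y -> le y x -> x = y),
      (forall x y z, le x y -> le y z -> le x z) /\
      (forall x y z, le x y -> le (x + z) (y + z)),
      (forall (a : R) x y, 0 <= a -> le x y -> le (a *: x) (a *: y))
    & (forall x y, [/\ le x (join x y), le y (join x y) &
                     forall z, le x z -> le y z -> le (join x y) z])].

Definition rpos (x : X) : X := join x 0.
Definition rneg (x : X) : X := join (- x) 0.
Definition rabs (x : X) : X := join x (- x).

Definition solid (V : set X) : Prop :=
  forall x y, V x -> le (rabs y) (rabs x) -> V y.

Definition poscone : set X := [set x | le 0 x].

Definition convex_cone (C : set X) : Prop :=
  (forall x y, C x -> C y -> C (x + y)) /\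
  (forall (a : R) x, 0 <= a -> C x -> C (a *: x)) /\
  convex_set (C : set (convex_lmodType X)).
End RieszDefs.

Section DualDefs.
Variables (R : realType) (X : topologicalLmodType R).

Definition locally_convex_solid (le : X -> X -> Prop) (join : X -> X -> X) : Prop :=
  forall U, nbhs (0 : X) U ->
    exists V : set X, [/\ nbhs (0 : X) V, convex_set (V : set (convex_lmodType X)),
                          solid le join V & V `<=` U].

Definition topdual : set (X -> R) := [set f : X -> R | scalar f /\ continuous (f : X -> R)].

Definition dualpos (le : X -> X -> Prop) : set (X -> R) :=
  [set f | topdual f /\ forall x, le 0 x -> 0 <= f x].

Definition cone_gen (G : set (X -> R)) : set (X -> R) :=
  [set f | exists (n : nat) (c : 'I_n -> R) (g : 'I_n -> X -> R),
      [/\ forall i, 0 <= c i, forall i, G (g i) &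
          forall x, f x = \sum_(i < n) c i * g i x]].

Definition polar (C : set X) : set (X -> R) :=
  [set g | topdual g /\ forall x, C x -> g x <= 0].
End DualDefs.

(* Main.v *)
Require Import Defs.
From HB Require Import structures.
From mathcomp Require Import all_boot all_order all_algebra.
From mathcomp Require Import all_classical all_reals all_analysis.
From mathcomp Require Import ring lra.
Import Order.TTheory GRing.Theory Num.Theory numFieldTopology.Exports.
Local Open Scope classical_set_scope.
Local Open Scope ring_scope.
Set Implicit Arguments. Unset Strict Implicit. Unset Printing Implicit Defensive.

Section InfHelp.
Variable R : realType.
Lemma inf_le_elt (E : set R) (L e : R) :
  (forall y, E y -> L <= y) -> E e -> inf E <= e.
Proof. by move=> HL Ee; apply: ge_inf => //; exists L. Qed.
Lemma le_inf_all (E : set R) (x : R) :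
  E !=set0 -> (forall y, E y -> x <= y) -> x <= inf E.
Proof. by move=> nE Hx; apply: lb_le_inf. Qed.
End InfHelp.

Section HahnBanach.
Variables (R : realType) (X : lmodType R).

Definition sublin (p : X -> R) :=
  (forall x y, p (x + y) <= p x + p y) /\
  (forall (a : R) x, 0 < a -> p (a *: x) <= a * p x).

Lemma sublin0 p : sublin p -> p 0 = 0.
Proof.
move=> [hA hH]; have h1 := hA 0 0; rewrite addr0 in h1.
have two : (0:R) < 2^-1 by rewrite invr_gt0.
have h2 := hH _ 0 two; rewrite scaler0 in h2.
lra.
Qed.

Lemma sublin_lb p x : sublin p -> - p (- x) <= p x.
Proof.
move=> sp; have := sp.1 x (- x); rewrite subrr sublin0 //; lra.
Qed.

Lemma sublin_hom p a x : sublin p -> 0 <= a -> p (a *: x) = a * p x.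
Proof.
move=> sp; rewrite le_eqVlt => /orP[/eqP <-|a0].
  by rewrite scale0r mul0r sublin0.
apply/eqP; rewrite eq_le sp.2 //=.
have := sp.2 a^-1 (a *: x); rewrite invr_gt0 scalerA mulVf ?gt_eqF // scale1r.
move=> /(_ a0) h.
have ai : 0 < a^-1 by rewrite invr_gt0.
by rewrite -(ler_pM2l ai) mulrA mulVf ?gt_eqF // mul1r.
Qed.

Definition HBT (p : X -> R) := {q : X -> R | sublin q /\ forall x, q x <= p x}.

Theorem hahn_banach (p : X -> R) : sublin p ->
  exists k : X -> R, (forall a u v, k (a *: u + v) = a * k u + k v) /\
                     forall x, k x <= p x.
Proof.
move=> sp.
pose top : HBT p := exist _ p (conj sp (fun x => lexx _)).
pose Rl := fun (q1 q2 : HBT p) => `[< forall x, sval q2 x <= sval q1 x >].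
have [q qmax] : exists t, premaximal (fun a b => Rl a b) t.
  apply: (ZL_preorder top).
  - by move=> t; apply/asboolP => x.
  - move=> r s t /asboolP h1 /asboolP h2; apply/asboolP => x.
    exact: le_trans (h2 x) (h1 x).
  move=> A Atot.
  have [->|/set0P [q0 Aq0]] := eqVneq A set0.
    by exists top => s.
  pose E x := [set sval r x | r in A].
  have Elb x y : E x y -> - p (- x) <= y.
    move=> [r _ <-]; have [sr rp] := svalP r.
    apply: le_trans _ (sublin_lb x sr); rewrite lerN2; exact: rp.
  have En x : E x !=set0 by exists (sval q0 x); exists q0.
  pose m x := inf (E x).
  have mle r x : A r -> m x <= sval r x.
    by move=> Ar; apply: (inf_le_elt (Elb x)); exists r.
  have mge x y : (forall r, A r -> y <= sval r x) -> y <= m x.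
    by move=> H; apply: le_inf_all => // _ [r Ar <-]; exact: H.
  have msub : sublin m.
    split.
      move=> x y.
      have H1 : forall r1 r2, A r1 -> A r2 -> m (x + y) <= sval r1 x + sval r2 y.
        move=> r1 r2 A1 A2; have [/asboolP h|/asboolP h] := Atot _ _ A1 A2.
          apply: le_trans (mle _ _ A2) _; apply: le_trans ((svalP r2).1.1 x y) _.
          by rewrite lerD2r.
        apply: le_trans (mle _ _ A1) _; apply: le_trans ((svalP r1).1.1 x y) _.
        by rewrite lerD2l.
      have H2 : forall r2, A r2 -> m (x + y) - sval r2 y <= m x.
        by move=> r2 A2; apply: mge => r1 A1; rewrite lerBlDr; exact: H1.
      rewrite -lerBlDl; apply: mge => r2 A2; rewrite lerBlDl -lerBlDr.
      exact: H2.
    move=> a x a0; rewrite -ler_pdivrMl //; apply: mge => r Ar.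
    rewrite ler_pdivrMl //; apply: le_trans (mle _ _ Ar) _.
    exact: (svalP r).1.2.
  have mp x : m x <= p x by apply: le_trans (mle _ _ Aq0) _; exact: (svalP q0).2.
  exists (exist _ m (conj msub mp)) => s As; apply/asboolP => x /=; exact: mle.
set Q := sval q; have [sQ Qp] := svalP q; rewrite -/Q in sQ Qp.
have Q0 := sublin0 sQ.
have Qneg a : Q (- a) = - Q a.
  pose F x := [set Q (x + t *: a) - t * Q a | t in [set t : R | 0 <= t]].
  have Flb x y : F x y -> - Q (- x) <= y.
    move=> [t tt0 <-]; rewrite -(sublin_hom a sQ tt0).
    have := sQ.1 (x + t *: a) (- x).
    rewrite addrC addKr; lra.
  have Fn x : F x !=set0 by exists (Q (x + 0 *: a) - 0 * Q a); exists 0 => /=.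
  pose r x := inf (F x).
  have rle x t : 0 <= t -> r x <= Q (x + t *: a) - t * Q a.
    by move=> tt0; apply: (inf_le_elt (Flb x)); exists t.
  have rge x y : (forall t, 0 <= t -> y <= Q (x + t *: a) - t * Q a) -> y <= r x.
    by move=> H; apply: le_inf_all => // _ [t tt0 <-]; exact: H.
  have rsub : sublin r.
    split.
      move=> x y.
      have H1 s t : 0 <= s -> 0 <= t ->
          r (x + y) <= (Q (x + s *: a) - s * Q a) + (Q (y + t *: a) - t * Q a).
        move=> s0 tt0; apply: le_trans (rle _ (s + t) (addr_ge0 s0 tt0)) _.
        rewrite scalerDl addrACA.
        have := sQ.1 (x + s *: a) (y + t *: a); lra.
      have H2 t : 0 <= t -> r (x + y) - (Q (y + t *: a) - t * Q a) <= r x.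
        by move=> tt0; apply: rge => s s0; rewrite lerBlDr; exact: H1.
      rewrite -lerBlDl; apply: rge => t tt0; rewrite lerBlDl -lerBlDr.
      exact: H2.
    move=> b x b0; rewrite -ler_pdivrMl //; apply: rge => t tt0.
    rewrite ler_pdivrMl //.
    apply: le_trans (rle _ (b * t) (mulr_ge0 (ltW b0) tt0)) _.
    rewrite -scalerA -scalerDr mulrBr mulrA lerD2r.
    exact: sQ.2.
  have rp x : r x <= p x.
    apply: le_trans (rle x 0 (lexx _)) _.
    by rewrite scale0r addr0 mul0r subr0.
  have : Rl q (exist _ r (conj rsub rp)).
    by apply/asboolP => x /=; apply: le_trans (rle x 0 (lexx _)) _; rewrite scale0r addr0 mul0r subr0.
  move=> /qmax /asboolP /= /(_ (- a)) h.
  have := rle (- a) 1 ler01; rewrite scale1r addNr Q0 mul1r sub0r => h2.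
  rewrite -/Q in h; have := sublin_lb a sQ; lra.
have Qadd x y : Q (x + y) = Q x + Q y.
  apply/eqP; rewrite eq_le sQ.1 /=.
  have := sQ.1 (- x) (- y); rewrite -opprD !Qneg; lra.
exists Q; split => //.
move=> c u v; rewrite Qadd; congr (_ + _).
have [c0|c0] := leP 0 c; first exact: sublin_hom.
have -> : c *: u = - ((- c) *: u) by rewrite scaleNr opprK.
rewrite Qneg sublin_hom //; last by rewrite oppr_ge0 ltW.
by rewrite mulNr opprK.
Qed.
End HahnBanach.

Section TopoHelp.
Variables (R : realType) (X : topologicalLmodType R).

Lemma nbhs_shift (U : set X) (x : X) : nbhs 0 U -> nbhs x [set t | U (t - x)].
Proof.
move=> hU.
have H : (fun t => t - x) @ x --> (x - x).
  apply: (@continuous_comp _ _ _ (fun t => (t, x)) (fun z : X * X => z.1 - z.2)).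
    by apply: cvg_pair => /=; [exact: cvg_id|exact: cvg_cst].
  exact: sub_continuous.
rewrite subrr in H; exact: H.
Qed.

Lemma nbhs_scale (U : set X) (c : R) : nbhs 0 U -> nbhs 0 [set y | U (c *: y)].
Proof.
move=> hU.
have H : (fun y : X => c *: y) @ (0 : X) --> c *: (0 : X).
  apply: (@continuous_comp _ _ _ (fun y : X => ((c : R^o), y)) (fun z : R^o * X => z.1 *: z.2) (0 : X)).
    have := @cvg_pair _ _ _ (nbhs (0:X)) (nbhs (c:R^o)) (nbhs (0:X)) _ _ _ (fun=> (c : R^o)) id (cvg_cst _) cvg_id.
    by move=> h; exact: h.
  exact: scale_continuous.
rewrite scaler0 in H; exact: H.
Qed.

Lemma absorbing (U : set X) (y : X) : nbhs 0 U -> exists2 t : R, 0 < t & U (t^-1 *: y).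
Proof.
move=> hU.
have H : (fun r : R^o => r *: y) @ (0 : R^o) --> (0 : R^o) *: y.
  apply: (@continuous_comp _ _ _ (fun r : R^o => (r, y)) (fun z : R^o * X => z.1 *: z.2) (0 : R^o)).
    have := @cvg_pair _ _ _ (nbhs (0:R^o)) (nbhs (0:R^o)) (nbhs y) _ _ _ id (fun=> y) cvg_id (cvg_cst _).
    by move=> h; exact: h.
  exact: scale_continuous.
rewrite scale0r in H.
have /nbhs_norm0P [e /= e0 He] := H U hU.
exists (e / 2)^-1; first by rewrite invr_gt0 divr_gt0.
rewrite invrK; apply: He => /=.
rewrite ger0_norm ?divr_ge0 ?ltW //; lra.
Qed.

Lemma cont_small (f : X -> R) (e : R) : continuous f -> f 0 = 0 -> 0 < e ->
  nbhs 0 [set x | `|f x| < e].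
Proof.
move=> hf f0 e0; have H : f @ (0:X) --> (0:R) by rewrite -f0; exact: hf.
have N0 : nbhs (0:R) [set r : R | `|r| < e] by have := @nbhs0_lt R R^o e e0; move=> h; exact: h.
exact: (H _ N0).
Qed.

Lemma lin_cont (k : X -> R) : (forall u v, k (u + v) = k u + k v) ->
  (forall e, 0 < e -> nbhs 0 [set x | `|k x| < e]) -> continuous k.
Proof.
move=> kD hk x; apply/cvgrPdist_lt => e e0.
have := nbhs_shift x (hk e e0); apply: filterS => t /=.
have -> : k t = k (t - x) + k x by rewrite -kD subrK.
by rewrite (addrC (k (t - x))) opprD addrA subrr sub0r normrN.
Qed.
End TopoHelp.

Section Lattice.
Variables (R : realType) (X : lmodType R) (le : X -> X -> Prop) (join : X -> X -> X).
Hypothesis hR : is_riesz_space le join.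

Let lrefl : forall x, le x x. Proof. by case: hR. Qed.
Let lanti : forall x y, le x y -> le y x -> x = y. Proof. by case: hR. Qed.
Let ltrans : forall x y z, le x y -> le y z -> le x z. Proof. by case: hR => _ _ []. Qed.
Let ladd : forall x y z, le x y -> le (x + z) (y + z). Proof. by case: hR => _ _ []. Qed.
Let lscal : forall (a : R) x y, 0 <= a -> le x y -> le (a *: x) (a *: y). Proof. by case: hR. Qed.
Let lsup : forall x y, [/\ le x (join x y), le y (join x y) &
                     forall z, le x z -> le y z -> le (join x y) z]. Proof. by case: hR. Qed.

Lemma le_add2 a b c d : le a b -> le c d -> le (a + c) (b + d).
Proof.
move=> h1 h2; apply: ltrans (ladd c h1) _.
by rewrite (addrC b c) (addrC b d); apply: ladd.
Qed.

Lemma join_sym a b : join a b = join b a.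
Proof.
have [h1 h2 h3] := lsup a b; have [h4 h5 h6] := lsup b a.
by apply: lanti; [apply: h3|apply: h6].
Qed.

Lemma join_tr a b z : join a b + z = join (a + z) (b + z).
Proof.
have [h1 h2 h3] := lsup a b; have [h4 h5 h6] := lsup (a + z) (b + z).
apply: lanti; last by apply: h6; apply: ladd.
have H : le (join a b) (join (a + z) (b + z) - z).
  apply: h3.
    by have := ladd (- z) h4; rewrite addrK.
  by have := ladd (- z) h5; rewrite addrK.
by have := ladd z H; rewrite subrK.
Qed.

Lemma rpos_rneg x : rpos join x - rneg join x = x.
Proof.
rewrite /rpos /rneg; apply/eqP; rewrite subr_eq addrC join_tr addNr add0r.
by rewrite join_sym.
Qed.

Lemma rpos_ge0 x : le 0 (rpos join x). Proof. by have [] := lsup x 0. Qed.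
Lemma rneg_ge0 x : le 0 (rneg join x). Proof. by have [] := lsup (- x) 0. Qed.

Lemma neg_le0 p : le 0 p -> le (- p) 0.
Proof. by move=> h; have := ladd (- p) h; rewrite add0r subrr. Qed.

Lemma abs_pos z : le 0 z -> rabs join z = z.
Proof.
move=> hz; have [h1 h2 h3] := lsup z (- z).
apply: lanti => //; apply: h3 => //.
exact: ltrans (neg_le0 hz) hz.
Qed.

Lemma abs_ge0 w : le 0 (rabs join w).
Proof.
have [h1 h2 _] := lsup w (- w); set r := join w (- w) in h1 h2 *.
have H : le 0 (r + r).
  apply: ltrans (_ : le 0 (r - w)) _.
    by have := ladd (- w) h1; rewrite subrr.
  by rewrite addrC; apply: ladd.
have hh : (2^-1 : R) *: (r + r) = r.
  rewrite scalerDr -scalerDl; have -> : (2^-1 + 2^-1 : R) = 1 by field. by rewrite scale1r.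
have i2 : (0 : R) <= 2^-1 by rewrite invr_ge0.
by have := lscal i2 H; rewrite scaler0 hh.
Qed.

Lemma rneg_le_abs p w : le 0 p -> le (rneg join (p - w)) (rabs join w).
Proof.
move=> hp; have [_ _ h3] := lsup (- (p - w)) 0.
apply: h3; last exact: abs_ge0.
rewrite opprB; apply: (@ltrans _ w).
  by have := ladd w (neg_le0 hp); rewrite add0r addrC.
by have [] := lsup w (- w).
Qed.
End Lattice.

Section Misc.
Variables (R : realType) (X : topologicalLmodType R).

Lemma convex_comb (W : set (convex_lmodType X)) (a b : X) (l : R) :
  convex_set W -> W a -> W b -> 0 <= l -> l <= 1 -> W (l *: a + (1 - l) *: b).
Proof.
move=> hW Wa Wb l0 l1.
have := hW a b (Itv01 l0 l1) (mem_set Wa) (mem_set Wb).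
by rewrite inE.
Qed.

Lemma lin_props (f : X -> R) : scalar f ->
  [/\ f 0 = 0, (forall u v, f (u + v) = f u + f v) & (forall a u, f (a *: u) = a * f u)].
Proof.
move=> hf.
have f0 : f 0 = 0.
  have := hf 1 0 0; rewrite scaler0 addr0 mul1r => /eqP.
  by rewrite -subr_eq0 opprD addrA subrr sub0r oppr_eq0 => /eqP.
split => //.
  by move=> u v; have := hf 1 u v; rewrite scale1r mul1r.
by move=> a u; have := hf a u 0; rewrite addr0 f0 addr0.
Qed.
End Misc.

Theorem theorem1 (R : realType) (X : topologicalLmodType R)
  (le : X -> X -> Prop) (join : X -> X -> X)
  (hR : is_riesz_space le join)
  (hlcs : locally_convex_solid le join)
  (Gamma : set (X -> R))
  (hGpos : Gamma `<=` dualpos le)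
  (hGcpt : compact (Gamma : set {ptws X -> R}))
  (hGdense : dualpos le `<=` closure (cone_gen Gamma : set {ptws X -> R}))
  (C : set X) (hC : convex_cone C) (hCX : C `&` poscone le = [set 0])
  (f : X -> R) (hf : topdual f) :
  (exists V : set X,
      [/\ nbhs (0 : X) V, convex_set (V : set (convex_lmodType X)),
          solid le join V &
          exists M : R, forall x, C x -> V (rneg join x) -> f x <= M])
  <->
  (exists g, polar C g /\ forall x, le 0 x -> f x <= g x).
Proof.
have [lrefl lanti [ltrans ladd] lscal lsup] := hR.
have [fs fc] := hf.
have [f0 fD fZ] := lin_props fs.
have fN u : f (- u) = - f u by have := fZ (-1) u; rewrite scaleN1r mulN1r.
have C0 : C 0 by have : [set (0:X)] 0 by []; rewrite -hCX => -[].
split.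
- move=> [V [hV0 hVc hVs [M hM]]].
  have hU : nbhs (0:X) (V `&` [set x | `|f x| < 1]).
    by apply: filterI => //; exact: cont_small.
  have [W [hW0 hWc hWs WU]] := hlcs _ hU.
  have W0 : W 0 := nbhs_singleton hW0.
  set N := `|M| + 1.
  have N0 : 0 < N by rewrite ltr_wpDl.
  pose S (y : X) := [set e : R | exists c pp w t, [/\ C c, le 0 pp, 0 < t,
     W (t^-1 *: w) & y = c - pp + w] /\ e = - f pp + N * t ].
  have Ssum y1 y2 e1 e2 : S y1 e1 -> S y2 e2 -> S (y1 + y2) (e1 + e2).
    move=> [c1 [p1 [w1 [t1 [[C1 P1 T1 W1 E1] F1]]]]].
    move=> [c2 [p2 [w2 [t2 [[C2 P2 T2 W2 E2] F2]]]]].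
    exists (c1 + c2), (p1 + p2), (w1 + w2), (t1 + t2); split; first split.
    + exact: hC.1.
    + by have := le_add2 hR P1 P2; rewrite addr0.
    + exact: addr_gt0.
    + have l0 : 0 <= t1 / (t1 + t2) by rewrite divr_ge0 // ltW // addr_gt0.
      have l1 : t1 / (t1 + t2) <= 1.
        by rewrite ler_pdivrMr ?addr_gt0 // mul1r lerDl ltW.
      have := convex_comb hWc W1 W2 l0 l1.
      rewrite !scalerA.
      have -> : t1 / (t1 + t2) * t1^-1 = (t1 + t2)^-1.
        by field; rewrite ?gt_eqF ?addr_gt0.
      have -> : (1 - t1 / (t1 + t2)) * t2^-1 = (t1 + t2)^-1.
        by field; rewrite ?gt_eqF ?addr_gt0.
      by rewrite -scalerDr.
    + by rewrite E1 E2 opprD addrACA [c1 - p1 + _]addrACA.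
    + by rewrite F1 F2 fD mulrDr; lra.
  have Sscale a y e : 0 < a -> S y e -> S (a *: y) (a * e).
    move=> a0 [c [pp [w [t [[Cc P T0 Wt E] F]]]]].
    exists (a *: c), (a *: pp), (a *: w), (a * t); split; first split.
    + exact: hC.2.1 _ _ (ltW a0) Cc.
    + by have := lscal a 0 pp (ltW a0) P; rewrite scaler0.
    + exact: mulr_gt0.
    + rewrite scalerA.
      have -> : (a * t)^-1 * a = t^-1 by field; rewrite ?gt_eqF.
      exact: Wt.
    + by rewrite E scalerDr scalerBr.
    + by rewrite F fZ; ring.
  have Snon y : S y !=set0.
    have [t t0 Wt] := absorbing y hW0.
    exists (- f 0 + N * t), 0, 0, y, t; split => //; split => //.
    by rewrite subrr add0r.
  have S0 e : S 0 e -> 0 <= e.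
    move=> [c [pp [w [t [[Cc P T0 Wt E] F]]]]].
    have cE : c = pp - w.
      apply/eqP; rewrite -subr_eq0; apply/eqP.
      by rewrite opprD opprK addrA -E.
    have ti : 0 <= t^-1 by rewrite invr_ge0 ltW.
    have ce : t^-1 *: c = t^-1 *: pp - t^-1 *: w by rewrite cE scalerBr.
    have Cc' : C (t^-1 *: c) := hC.2.1 _ _ ti Cc.
    have Pp' : le 0 (t^-1 *: pp) by have := lscal _ _ _ ti P; rewrite scaler0.
    have hn : le (rabs join (rneg join (t^-1 *: c))) (rabs join (t^-1 *: w)).
      by rewrite (abs_pos hR (rneg_ge0 hR _)) ce; exact: (rneg_le_abs hR (t^-1 *: w) Pp').
    have Wn := hWs _ _ Wt hn.
    have [Vn _] := WU _ Wn.
    have fc' := hM _ Cc' Vn.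
    have [_ fw] := WU _ Wt.
    have fp : f (t^-1 *: pp) = f (t^-1 *: c) + f (t^-1 *: w).
      by rewrite -fD ce subrK.
    rewrite !fZ in fp; rewrite fZ in fc'; move: fw; rewrite /= fZ => fw.
    have hMN : M <= `|M| := ler_norm M.
    move: fw => /ltr_normlP [_ fw].
    have h1 : t^-1 * f pp <= N by rewrite /N; lra.
    have h2 : f pp <= N * t.
      have -> : f pp = t * (t^-1 * f pp) by rewrite mulrA mulfV ?gt_eqF ?mul1r.
      by rewrite mulrC ler_wpM2r // ltW.
    by rewrite F; lra.
  have Slb y : exists L, forall e, S y e -> L <= e.
    have [e' He'] := Snon (- y).
    exists (- e') => e He.
    have := Ssum _ _ _ _ He He'; rewrite subrr => /S0; lra.
  pose s y := inf (S y).
  have sle y e : S y e -> s y <= e.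
    by have [L HL] := Slb y; exact: inf_le_elt HL.
  have sge y x : (forall e, S y e -> x <= e) -> x <= s y.
    by move=> H; apply: le_inf_all (Snon y) H.
  have ssub : sublin s.
    split.
      move=> x y.
      have H1 e1 e2 : S x e1 -> S y e2 -> s (x + y) <= e1 + e2.
        by move=> h1 h2; apply: sle; exact: Ssum.
      have H2 e2 : S y e2 -> s (x + y) - e2 <= s x.
        by move=> h2; apply: sge => e1 h1; rewrite lerBlDr; exact: H1.
      rewrite -lerBlDl; apply: sge => e2 h2; rewrite lerBlDl -lerBlDr.
      exact: H2.
    move=> a y a0; rewrite -ler_pdivrMl //; apply: sge => e He.
    by rewrite ler_pdivrMl //; apply: sle; exact: Sscale.
  have [k [klin kp]] := hahn_banach ssub.
  have kD u v : k (u + v) = k u + k v by have := klin 1 u v; rewrite scale1r mul1r.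
  have k0 : k 0 = 0 by have := kD 0 0; rewrite addr0 => /eqP; rewrite -subr_eq0 opprD addrA subrr sub0r oppr_eq0 => /eqP.
  have kN u : k (- u) = - k u.
    by have := klin (-1) u 0; rewrite addr0 k0 addr0 scaleN1r mulN1r.
  have sup_small y t : 0 < t -> W (t^-1 *: y) -> s y <= N * t.
    move=> t0 Wy; apply: le_trans (sle y (- f 0 + N * t) _) _.
      by exists 0, 0, y, t; split => //; split => //; rewrite subrr add0r.
    by rewrite f0 oppr0 add0r.
  have small_le0 a : (forall t, 0 < t -> a <= N * t) -> a <= 0.
    move=> H; rewrite leNgt; apply/negP => a0.
    have two0 : (0:R) < 2 by [].
    have := H (a / (2 * N)) (divr_gt0 a0 (mulr_gt0 two0 N0)).
    have -> : N * (a / (2 * N)) = a / 2 by field; rewrite gt_eqF.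
    lra.
  exists k; split; first split; first split.
  + by move=> a u v; rewrite klin.
  + apply: (@lin_cont R X k kD) => e e0.
    have t0 : 0 < e / (2 * N) by rewrite divr_gt0 // mulr_gt0.
    set t := e / (2 * N) in t0 *.
    have hh := filterI (nbhs_scale t^-1 hW0) (nbhs_scale (- t^-1) hW0).
    have sub : ([set y | W (t^-1 *: y)] `&` [set y | W ((- t^-1) *: y)]) `<=`
               [set x | `|k x| < e].
      move=> y [/= Wy Wny].
      have k1 := le_trans (kp y) (sup_small y t t0 Wy).
      have : W (t^-1 *: - y) by rewrite scalerN -scaleNr.
      move=> /(sup_small _ _ t0) /(le_trans (kp _)); rewrite kN => k2.
      have Ne : N * t = e / 2 by rewrite /t; field; rewrite gt_eqF.
      rewrite Ne in k1 k2.
      rewrite ltr_norml; apply/andP; split; lra.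
    exact: (filterS sub (hh (@nbhs_filter X 0))).
  + move=> x Cx; apply: small_le0 => t t0.
    apply: le_trans (kp x) _; apply: le_trans (sle x (- f 0 + N * t) _) _.
      exists x, 0, 0, t; split => //; split => //.
        by rewrite scaler0.
      by rewrite subr0 addr0.
    by rewrite f0 oppr0 add0r.
  + move=> x Px.
    have : k (- x) + f x <= 0.
      apply: small_le0 => t t0.
      have : k (- x) <= - f x + N * t.
        apply: le_trans (kp _) _; apply: sle.
        exists 0, x, 0, t; split => //; split => //.
          by rewrite scaler0.
        by rewrite sub0r addr0.
      lra.
    rewrite kN; lra.
- move=> [g [[[gs gc] gC] hfg]].
  have [g0 gD gZ] := lin_props gs.
  have h2 : (0:R) < 2^-1 by rewrite invr_gt0.
  have hU : nbhs (0:X) ([set x | `|g x| < 2^-1] `&` [set x | `|f x| < 2^-1]).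
    by apply: filterI; apply: cont_small.
  have [V [hV0 hVc hVs VU]] := hlcs _ hU.
  exists V; split => //; exists 1 => x Cx Vx.
  have [/= gn fn] := VU _ Vx.
  have h1 := hfg _ (rpos_ge0 hR x).
  have gx := gC x Cx.
  have fx : f x = f (rpos join x) - f (rneg join x).
    by rewrite -fN -fD (rpos_rneg hR).
  have gpx : g (rpos join x) = g x + g (rneg join x).
    rewrite -gD; congr g.
    by rewrite -[X in _ = X + _](rpos_rneg hR x) subrK.
  move: gn => /ltr_normlP [_ gn]; move: fn => /ltr_normlP [fn _].
  rewrite fx; lra.
Qed.
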